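(* Let $g>0$, $p_0<0$, $\gamma\in\mathbb{R}$, and let $\lambda_*>0$ with $\lambda_*-2\gamma p_0>0$ and $g-\gamma\sqrt{\lambda_*}\neq0$ satisfy the dispersion relation $$\frac{\lambda_*}{g-\gamma\sqrt{\lambda_*}}+\tanh\!\Big(\frac{2p_0}{\sqrt{\lambda_*}+\sqrt{\lambda_*-2\gamma p_0}}\Big)=0.$$ For $p\in[p_0,0]$ put $r(p)=\sqrt{\lambda_*-2\gamma p}$ and $r_0=r(p_0)$, and define $$H(p)=\frac{2(p-p_0)}{r(p)+r_0},\qquad Q^*=\lambda_*-\frac{4gp_0}{\sqrt{\lambda_*}+r_0},\qquad m(q,p)=\frac{r_0}{r(p)}\sinh(H(p))\cos q .$$ Assume $$\Delta:=(g-\gamma\sqrt{\lambda_*})^2-\lambda_*^2\neq0\qquad\text{and}\qquad 2gp_0+\lambda_*r_0+\sqrt{\lambda_*}\,r_0^2\neq0,$$ and set $$C_0=\frac{\sqrt{\lambda_*}\,\big[3g(g-\gamma\sqrt{\lambda_*})+\lambda_*(\gamma^2-\lambda_* )\big]\,(r_0+\sqrt{\lambda_*})}{4\,\Delta\,\big[2gp_0+\lambda_*r_0+\sqrt{\lambda_*}\,r_0^2\big]},\qquad C_2=\frac{3g(g-\gamma\sqrt{\lambda_*})+\lambda_*(\gamma^2-3\lambda_* )}{8\lambda_*^{5/2}} .$$ Define $$\begin{aligned}u(q,p)={}&r_0^2\Big[C_0\frac{H(p)}{r(p)}-\gamma\frac{1-\cosh(2H(p))}{8r^3(p)}+\frac{\sinh(2H(p))}{4r^2(p)}\Big]\\&+r_0^2\cos(2q)\Big[C_2\frac{\sinh(2H(p))}{r(p)}-\gamma\frac{1-\cosh(2H(p))}{8r^3(p)}+\frac{\sinh(2H(p))}{4r^2(p)}\Big],\end{aligned}$$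 and $h^*(q,p;b)=H(p)+b\,m(q,p)+b^2u(q,p)$. Then, with vorticity $\gamma$ and $Q=Q^*$: - the coefficients of $b^0,b^1,b^2$ in $\mathcal{H}[h^*](q,p)$ vanish identically on $R=[-\pi,\pi]\times[p_0,0]$; - the coefficients of $b^0,b^1,b^2$ in $\mathcal{B}_0[h^*](q)$ vanish for all $q$; - $\mathcal{B}_1[h^*]\equiv0$. That is, $\mathcal{H}[h^*]=\mathcal{O}(b^3)$, $\mathcal{B}_0[h^*]=\mathcal{O}(b^3)$ and $\mathcal{B}_1[h^*]=0$.
   Context: For a function $h(q,p)$ on the rectangle $R=[-\pi,\pi]\times[p_0,0]$, constants $g>0$ (gravity), $\gamma\in\mathbb{R}$ (vorticity), $Q\in\mathbb{R}$ (hydraulic head) and $p_0<0$ (relative mass flux), define $$\mathcal{H}[h]=(1+h_q^2)h_{pp}-2h_ph_qh_{pq}+h_p^2h_{qq}-\gamma h_p^3\quad\text{on } R,$$ $$\mathcal{B}_0[h](q)=1+h_q^2(q,0)+\big(2gh(q,0)-Q\big)h_p^2(q,0),\qquad \mathcal{B}_1[h](q)=h(q,p_0).$$ These are the equations for the height function in the Dubreil-Jacotin formulation of periodic travelling water waves with constant vorticity over a flat bed; $h$ is even and $2\pi$-periodic in $q$. When $h$ depends polynomially on a parameter $b$, these expressions are polynomials in $b$ with coefficients that are functions of $(q,p)$ (respectively of $q$). ''$=\mathcal{O}(b^k)$'' means the coefficients of $b^0,\dots,b^{k-1}$ vanish identically. The function $H$ is the laminar (trivial) solution and $m$ the solution of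 the linearised problem; for $\gamma=0$ the function $u$ reduces to the irrotational second-order term. *)

(* Defs.v *)
From Stdlib Require Import Reals ClassicalEpsilon.
Open Scope R_scope.

(* The derivative of f at x (the unique l with derivable_pt_lim f x l when f is
   differentiable at x; an unspecified value otherwise). *)
Definition Dx (f : R -> R) (x : R) : R :=
  epsilon (inhabits 0) (fun l => derivable_pt_lim f x l).

Definition d_q (h : R -> R -> R) (q p : R) : R := Dx (fun q' => h q' p) q.
Definition d_p (h : R -> R -> R) (q p : R) : R := Dx (fun p' => h q p') p.
Definition d_qq (h : R -> R -> R) (q p : R) : R := Dx (fun q' => d_q h q' p) q.
Definition d_pp (h : R -> R -> R) (q p : R) : R := Dx (fun p' => d_p h q p') p.
Definition d_pq (h : R -> R -> R) (q p : R) : R := Dx (fun q' => d_p h q' p) q.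

(* The operators of the Dubreil-Jacotin formulation. *)
Definition Hop (gamma : R) (h : R -> R -> R) (q p : R) : R :=
  (1 + (d_q h q p)^2) * d_pp h q p
  - 2 * d_p h q p * d_q h q p * d_pq h q p
  + (d_p h q p)^2 * d_qq h q p
  - gamma * (d_p h q p)^3.

Definition B0op (g Q : R) (h : R -> R -> R) (q : R) : R :=
  1 + (d_q h q 0)^2 + (2 * g * h q 0 - Q) * (d_p h q 0)^2.

Definition B1op (p0 : R) (h : R -> R -> R) (q : R) : R := h q p0.

(* "F(b) = O(b^3)" for an expression polynomial in b: F(b) = b^3 * P(b) for a
   polynomial P, i.e. the coefficients of b^0, b^1, b^2 vanish. *)
Definition is_O_b3 (F : R -> R) : Prop :=
  exists (n : nat) (c : nat -> R),
    forall b, F b = b^3 * sum_f_R0 (fun k => c k * b^k) n.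

Definition rr (lam gamma p : R) : R := sqrt (lam - 2 * gamma * p).
Definition r0 (lam gamma p0 : R) : R := rr lam gamma p0.

Definition Hlam (lam gamma p0 p : R) : R :=
  2 * (p - p0) / (rr lam gamma p + r0 lam gamma p0).

Definition Qstar (g lam gamma p0 : R) : R :=
  lam - 4 * g * p0 / (sqrt lam + r0 lam gamma p0).

Definition mlin (lam gamma p0 q p : R) : R :=
  r0 lam gamma p0 / rr lam gamma p * sinh (Hlam lam gamma p0 p) * cos q.

Definition Delta_w (g lam gamma : R) : R := (g - gamma * sqrt lam)^2 - lam^2.

Definition Den0 (g lam gamma p0 : R) : R :=
  2 * g * p0 + lam * r0 lam gamma p0 + sqrt lam * (r0 lam gamma p0)^2.

Definition C0 (g lam gamma p0 : R) : R :=
  sqrt lam * (3 * g * (g - gamma * sqrt lam) + lam * (gamma^2 - lam))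
  * (r0 lam gamma p0 + sqrt lam)
  / (4 * Delta_w g lam gamma * Den0 g lam gamma p0).

Definition C2 (g lam gamma : R) : R :=
  (3 * g * (g - gamma * sqrt lam) + lam * (gamma^2 - 3 * lam))
  / (8 * (sqrt lam)^5).

Definition u2 (g lam gamma p0 q p : R) : R :=
  let r := rr lam gamma p in
  let R0 := r0 lam gamma p0 in
  let Hp := Hlam lam gamma p0 p in
  R0^2 * (C0 g lam gamma p0 * Hp / r
          - gamma * (1 - cosh (2 * Hp)) / (8 * r^3)
          + sinh (2 * Hp) / (4 * r^2))
  + R0^2 * cos (2 * q) *
         (C2 g lam gamma * sinh (2 * Hp) / r
          - gamma * (1 - cosh (2 * Hp)) / (8 * r^3)
          + sinh (2 * Hp) / (4 * r^2)).

Definition hstar (g lam gamma p0 b : R) (q p : R) : R :=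
  Hlam lam gamma p0 p + b * mlin lam gamma p0 q p + b^2 * u2 g lam gamma p0 q p.

(* Main.v *)
From Stdlib Require Import Reals Lra Lia Psatz List ClassicalEpsilon.
From Coquelicot Require Import Coquelicot.
Require Import Defs.
Open Scope R_scope.
Import ListNotations.

Lemma Dx_eq f x l : derivable_pt_lim f x l -> Dx f x = l.
Proof.
  intros H. unfold Dx.
  assert (E : exists l0, derivable_pt_lim f x l0) by (exists l; exact H).
  pose proof (epsilon_spec (inhabits 0) (fun l0 => derivable_pt_lim f x l0) E) as H2.
  exact (uniqueness_limite _ _ _ _ H2 H).
Qed.

Lemma Dx_is f x l : is_derive f x l -> Dx f x = l.
Proof. intros H. apply Dx_eq. apply is_derive_Reals. exact H. Qed.

Fixpoint peval (l : list R) (b : R) : R :=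
  match l with nil => 0 | a :: l' => a + b * peval l' b end.
Fixpoint padd (l m : list R) : list R :=
  match l, m with
  | nil, _ => m
  | _, nil => l
  | a :: l', c :: m' => (a + c) :: padd l' m'
  end.
Definition pscal (a : R) (l : list R) : list R := map (fun x => a * x) l.
Fixpoint pmul (l m : list R) : list R :=
  match l with
  | nil => nil
  | a :: l' => padd (pscal a m) (0 :: pmul l' m)
  end.

Lemma peval_padd l m b : peval (padd l m) b = peval l b + peval m b.
Proof.
  revert m; induction l as [|a l IH]; intros m; simpl.
  - ring.
  - destruct m as [|c m]; simpl. ring. rewrite IH. ring.
Qed.

Lemma peval_pscal a l b : peval (pscal a l) b = a * peval l b.
Proof. unfold pscal. induction l as [|x l IH]; simpl. ring. rewrite IH. ring. Qed.

Lemma peval_pmul l m b : peval (pmul l m) b = peval l b * peval m b.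
Proof.
  induction l as [|a l IH]; simpl. ring.
  rewrite peval_padd, peval_pscal. simpl. rewrite IH. ring.
Qed.

Lemma peval_sum l b : peval l b = sum_f_R0 (fun k => nth k l 0 * b ^ k) (length l).
Proof.
  induction l as [|a l IH].
  - simpl. ring.
  - change (length (a :: l)) with (S (length l)).
    rewrite (decomp_sum _ (S (length l))) by lia. simpl pred.
    change (peval (a :: l) b) with (a + b * peval l b).
    rewrite IH, scal_sum. simpl nth. rewrite pow_O. f_equal. ring.
    apply sum_eq. intros i _. simpl. ring.
Qed.

Lemma O3 (F : R -> R) l : (forall b, F b = peval l b) ->
  nth 0 l 0 = 0 -> nth 1 l 0 = 0 -> nth 2 l 0 = 0 -> is_O_b3 F.
Proof.
  intros HF h0 h1 h2.
  destruct l as [|a0 [|a1 [|a2 l]]]; simpl in h0, h1, h2.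
  - exists 0%nat, (fun _ => 0). intros b. rewrite HF. simpl. ring.
  - exists 0%nat, (fun _ => 0). intros b. rewrite HF. simpl. subst. ring.
  - exists 0%nat, (fun _ => 0). intros b. rewrite HF. simpl. subst. ring.
  - exists (length l), (fun k => nth k l 0). intros b. rewrite HF, <- peval_sum.
    simpl. subst. ring.
Qed.

Lemma ok_loc (lam gamma p : R) : 0 < lam - 2 * gamma * p ->
  locally p (fun y => 0 < lam - 2 * gamma * y).
Proof.
  intros H.
  assert (Hpos : 0 < (lam - 2 * gamma * p) / (2 * (Rabs gamma + 1))).
  { apply Rdiv_lt_0_compat. lra. pose proof (Rabs_pos gamma). lra. }
  exists (mkposreal _ Hpos). intros y Hy.
  change (Rabs (y - p) < (lam - 2 * gamma * p) / (2 * (Rabs gamma + 1))) in Hy.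
  pose proof (Rabs_pos gamma).
  assert (Hb : Rabs (2 * gamma * (y - p)) <= 2 * Rabs gamma * Rabs (y - p)).
  { rewrite !Rabs_mult, Rabs_right by lra. lra. }
  assert (Hc : 2 * Rabs gamma * Rabs (y - p) < lam - 2 * gamma * p).
  { assert (Hd : 2 * (Rabs gamma + 1) * Rabs (y - p) < lam - 2 * gamma * p).
    { replace (lam - 2 * gamma * p) with (2 * (Rabs gamma + 1) * ((lam - 2 * gamma * p) / (2 * (Rabs gamma + 1)))) by (field; lra).
      apply Rmult_lt_compat_l; lra. }
    pose proof (Rabs_pos (y - p)). nra. }
  pose proof (Rle_abs (2 * gamma * (y - p))). 
  assert (2 * gamma * y = 2 * gamma * p + 2 * gamma * (y - p)) by ring. lra.
Qed.

Definition sh (E:R) := (E - /E)/2.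
Definition ch (E:R) := (E + /E)/2.
Definition sh2 (E:R) := (E*E - /(E*E))/2.
Definition ch2 (E:R) := (E*E + /(E*E))/2.

Definition uE gam Rz C0 C2 c2 r H E :=
  Rz^2 * (C0 * H / r - gam * (1 - ch2 E) / (8 * r^3) + sh2 E / (4 * r^2))
  + Rz^2 * c2 * (C2 * sh2 E / r - gam * (1 - ch2 E) / (8 * r^3) + sh2 E / (4 * r^2)).
Definition hE gam Rz C0 C2 b c c2 r H E :=
  H + b * (Rz / r * sh E * c) + b^2 * uE gam Rz C0 C2 c2 r H E.

Definition W1 gam r E := gam/8 * (2*sh2 E/r^4 + 3*gam*(ch2 E - 1)/r^5) + 1/4*(2*ch2 E/r^3 + 2*gam*sh2 E/r^4).
Definition M1 gam r E := ch E / r^2 + gam * sh E / r^3.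
Definition A1 gam C0 r H E := C0*(1/r^2 + gam*H/r^3) + W1 gam r E.
Definition B1 gam C2 r E := C2*(2*ch2 E/r^2 + gam*sh2 E/r^3) + W1 gam r E.
Definition hE1 gam Rz C0 C2 b c c2 r H E :=
  / r + b * (Rz * c * M1 gam r E) + b^2 * (Rz^2 * A1 gam C0 r H E + Rz^2 * c2 * B1 gam C2 r E).

Definition W2 gam r E := gam/8*(4*ch2 E/r^5 + 14*gam*sh2 E/r^6 + 15*gam^2*(ch2 E-1)/r^7) + 1/4*(4*sh2 E/r^4 + 10*gam*ch2 E/r^5 + 8*gam^2*sh2 E/r^6).
Definition M2 gam r E := sh E/r^3 + 3*gam*ch E/r^4 + 3*gam^2*sh E/r^5.
Definition A2 gam C0 r H E := C0*(3*gam/r^4 + 3*gam^2*H/r^5) + W2 gam r E.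
Definition B2 gam C2 r E := C2*(4*sh2 E/r^3 + 6*gam*ch2 E/r^4 + 3*gam^2*sh2 E/r^5) + W2 gam r E.
Definition hE2 gam Rz C0 C2 b c c2 r H E :=
  gam / r^3 + b * (Rz * c * M2 gam r E) + b^2 * (Rz^2 * A2 gam C0 r H E + Rz^2 * c2 * B2 gam C2 r E).

Ltac nz := repeat (apply Rmult_integral_contrapositive_currified); try assumption; try lra;
  try (apply pow_nonzero; assumption).

Lemma gen_d1 gam Rz C0 C2 b c c2 (rf Hf Ef : R -> R) p :
 is_derive rf p (- gam / rf p) -> is_derive Hf p (/ rf p) -> is_derive Ef p (Ef p / rf p) ->
 rf p <> 0 -> Ef p <> 0 ->
 is_derive (fun y => hE gam Rz C0 C2 b c c2 (rf y) (Hf y) (Ef y)) p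
   (hE1 gam Rz C0 C2 b c c2 (rf p) (Hf p) (Ef p)).
Proof.
  intros Hr HH HE rn En.
  unfold hE, uE, sh, ch, sh2, ch2.
  auto_derive.
  - repeat split; try (eexists; eassumption); nz.
  - assert (Dr : Derive (fun x => rf x) p = - gam / rf p) by (apply is_derive_unique; exact Hr).
    assert (DH : Derive (fun x => Hf x) p = / rf p) by (apply is_derive_unique; exact HH).
    assert (DE : Derive (fun x => Ef x) p = Ef p / rf p) by (apply is_derive_unique; exact HE).
    rewrite Dr, DH, DE.
    unfold hE1, M1, A1, B1, W1, sh, ch, sh2, ch2. field. auto.
Qed.

Lemma gen_d2 gam Rz C0 C2 b c c2 (rf Hf Ef : R -> R) p :
 is_derive rf p (- gam / rf p) -> is_derive Hf p (/ rf p) -> is_derive Ef p (Ef p / rf p) ->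
 rf p <> 0 -> Ef p <> 0 ->
 is_derive (fun y => hE1 gam Rz C0 C2 b c c2 (rf y) (Hf y) (Ef y)) p
   (hE2 gam Rz C0 C2 b c c2 (rf p) (Hf p) (Ef p)).
Proof.
  intros Hr HH HE rn En.
  unfold hE1, M1, A1, B1, W1, sh, ch, sh2, ch2.
  auto_derive.
  - repeat split; try (eexists; eassumption); nz.
  - assert (Dr : Derive (fun x => rf x) p = - gam / rf p) by (apply is_derive_unique; exact Hr).
    assert (DH : Derive (fun x => Hf x) p = / rf p) by (apply is_derive_unique; exact HH).
    assert (DE : Derive (fun x => Ef x) p = Ef p / rf p) by (apply is_derive_unique; exact HE).
    rewrite Dr, DH, DE.
    unfold hE2, M2, A2, B2, W2, sh, ch, sh2, ch2. field. auto.
Qed.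

Definition Bf gam C2 r E := C2 * sh2 E / r - gam * (1 - ch2 E) / (8 * r^3) + sh2 E / (4 * r^2).
Definition hEq gam Rz C2 b s s2 r E :=
  b * (Rz / r * sh E * (- s)) + b^2 * (Rz^2 * (- (2 * s2)) * Bf gam C2 r E).
Definition hEqq gam Rz C2 b c c2 r E :=
  b * (Rz / r * sh E * (- c)) + b^2 * (Rz^2 * (- (4 * c2)) * Bf gam C2 r E).
Definition hE1q gam Rz C2 b s s2 r E :=
  b * (Rz * (- s) * M1 gam r E) + b^2 * (Rz^2 * (- (2 * s2)) * B1 gam C2 r E).

Lemma gen_q0 gam Rz C0 C2 b r H E q : r <> 0 ->
  is_derive (fun y => hE gam Rz C0 C2 b (cos y) (cos (2*y)) r H E) q
    (hEq gam Rz C2 b (sin q) (sin (2*q)) r E).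
Proof.
  intros rn. unfold hE, uE. auto_derive. auto.
  unfold hEq, Bf. field; auto.
Qed.

Lemma gen_q1 gam Rz C2 b r E q : r <> 0 ->
  is_derive (fun y => hEq gam Rz C2 b (sin y) (sin (2*y)) r E) q
    (hEqq gam Rz C2 b (cos q) (cos (2*q)) r E).
Proof.
  intros rn. unfold hEq. auto_derive. auto.
  unfold hEqq. field; auto.
Qed.

Lemma gen_q2 gam Rz C0 C2 b r H E q : r <> 0 ->
  is_derive (fun y => hE1 gam Rz C0 C2 b (cos y) (cos (2*y)) r H E) q
    (hE1q gam Rz C2 b (sin q) (sin (2*q)) r E).
Proof.
  intros rn. unfold hE1. auto_derive. auto.
  unfold hE1q. field; auto.
Qed.

Lemma sinh_e x : sinh x = sh (exp x).
Proof. unfold sinh, sh. rewrite exp_Ropp. reflexivity. Qed.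
Lemma sinh2_e x : sinh (2 * x) = sh2 (exp x).
Proof. unfold sinh, sh2. replace (2*x) with (x+x) by ring.
  rewrite exp_plus, Ropp_plus_distr, exp_plus, !exp_Ropp, Rinv_mult. reflexivity. Qed.
Lemma cosh2_e x : cosh (2 * x) = ch2 (exp x).
Proof. unfold cosh, ch2. replace (2*x) with (x+x) by ring.
  rewrite exp_plus, Ropp_plus_distr, exp_plus, !exp_Ropp, Rinv_mult. reflexivity. Qed.

Lemma rr_pos lam gam p : 0 < lam - 2 * gam * p -> 0 < rr lam gam p.
Proof. intros H. unfold rr. apply sqrt_lt_R0. exact H. Qed.

Lemma rr_d lam gam p : 0 < lam - 2 * gam * p ->
  is_derive (fun y => rr lam gam y) p (- gam / rr lam gam p).
Proof.
  intros H. pose proof (rr_pos _ _ _ H) as Hr. unfold rr in *. auto_derive.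
  - exact H.
  - unfold Rminus in *. field. lra.
Qed.

Lemma H_d lam gam p0 p : 0 < lam - 2 * gam * p -> 0 < lam - 2 * gam * p0 ->
  is_derive (fun y => Hlam lam gam p0 y) p (/ rr lam gam p).
Proof.
  intros H H0. pose proof (rr_pos _ _ _ H) as Hr. pose proof (rr_pos _ _ _ H0) as Hr0.
  assert (E1 : rr lam gam p * rr lam gam p = lam - 2 * gam * p) by (unfold rr; apply sqrt_sqrt; lra).
  assert (E2 : rr lam gam p0 * rr lam gam p0 = lam - 2 * gam * p0) by (unfold rr; apply sqrt_sqrt; lra).
  unfold Hlam, r0.
  apply is_derive_ext with (f := fun y => 2 * (y - p0) / (rr lam gam y + rr lam gam p0)).
  { intros; reflexivity. }
  pose proof (rr_d _ _ _ H) as D.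
  set (s0 := rr lam gam p0) in *.
  auto_derive.
  - split. eexists; exact D. split. lra. exact I.
  - assert (Dr : Derive (fun x => rr lam gam x) p = - gam / rr lam gam p) by (apply is_derive_unique; exact D). rewrite Dr.
    set (s := rr lam gam p) in *.
    replace (2 * gam * p) with (2 * gam * p0 - (s * s - s0 * s0)) in E1 |- * by lra.
    assert (G : gam * (p - p0) = (s0 * s0 - s * s) / 2) by lra.
    transitivity (2 / (s + s0) + 2 * (gam * (p - p0)) / (s * (s + s0) * (s + s0))).
    + field. lra.
    + rewrite G. field. lra.
Qed.

Lemma E_d lam gam p0 p : 0 < lam - 2 * gam * p -> 0 < lam - 2 * gam * p0 ->
  is_derive (fun y => exp (Hlam lam gam p0 y)) p (exp (Hlam lam gam p0 p) / rr lam gam p).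
Proof.
  intros H H0. pose proof (H_d _ _ _ _ H H0) as D. auto_derive.
  - eexists; exact D.
  - assert (Dr : Derive (fun x => Hlam lam gam p0 x) p = / rr lam gam p) by (apply is_derive_unique; exact D). rewrite Dr. unfold Rdiv. ring.
Qed.

Definition rE lam gam p := rr lam gam p.
Lemma hstar_eq g lam gam p0 b q p :
  hstar g lam gam p0 b q p =
  hE gam (r0 lam gam p0) (C0 g lam gam p0) (C2 g lam gam) b (cos q) (cos (2*q))
     (rr lam gam p) (Hlam lam gam p0 p) (exp (Hlam lam gam p0 p)).
Proof.
  unfold hstar, mlin, u2, hE, uE. cbv zeta.
  rewrite !sinh2_e, !cosh2_e, !sinh_e. reflexivity.
Qed.


Lemma dp_eq g lam gam p0 b q p : 0 < lam - 2 * gam * p -> 0 < lam - 2 * gam * p0 ->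
  d_p (hstar g lam gam p0 b) q p =
  hE1 gam (r0 lam gam p0) (C0 g lam gam p0) (C2 g lam gam) b (cos q) (cos (2*q))
     (rr lam gam p) (Hlam lam gam p0 p) (exp (Hlam lam gam p0 p)).
Proof.
  intros H H0. unfold d_p. apply Dx_is.
  apply is_derive_ext with (f := fun y => hE gam (r0 lam gam p0) (C0 g lam gam p0) (C2 g lam gam) b (cos q) (cos (2*q))
     (rr lam gam y) (Hlam lam gam p0 y) (exp (Hlam lam gam p0 y))).
  { intros t. symmetry. apply hstar_eq. }
  apply (gen_d1 _ _ _ _ _ _ _ (fun y => rr lam gam y) (fun y => Hlam lam gam p0 y) (fun y => exp (Hlam lam gam p0 y))).
  - apply rr_d; auto.
  - apply H_d; auto.
  - apply E_d; auto.
  - apply Rgt_not_eq, rr_pos; auto.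
  - apply Rgt_not_eq, exp_pos.
Qed.

Lemma dpp_eq g lam gam p0 b q p : 0 < lam - 2 * gam * p -> 0 < lam - 2 * gam * p0 ->
  d_pp (hstar g lam gam p0 b) q p =
  hE2 gam (r0 lam gam p0) (C0 g lam gam p0) (C2 g lam gam) b (cos q) (cos (2*q))
     (rr lam gam p) (Hlam lam gam p0 p) (exp (Hlam lam gam p0 p)).
Proof.
  intros H H0. unfold d_pp. apply Dx_is.
  apply is_derive_ext_loc with (f := fun y => hE1 gam (r0 lam gam p0) (C0 g lam gam p0) (C2 g lam gam) b (cos q) (cos (2*q))
     (rr lam gam y) (Hlam lam gam p0 y) (exp (Hlam lam gam p0 y))).
  { apply filter_imp with (2 := ok_loc _ _ _ H). intros t Ht. symmetry. apply dp_eq; auto. }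
  apply (gen_d2 _ _ _ _ _ _ _ (fun y => rr lam gam y) (fun y => Hlam lam gam p0 y) (fun y => exp (Hlam lam gam p0 y))).
  - apply rr_d; auto.
  - apply H_d; auto.
  - apply E_d; auto.
  - apply Rgt_not_eq, rr_pos; auto.
  - apply Rgt_not_eq, exp_pos.
Qed.

Lemma dq_eq g lam gam p0 b q p : 0 < lam - 2 * gam * p ->
  d_q (hstar g lam gam p0 b) q p =
  hEq gam (r0 lam gam p0) (C2 g lam gam) b (sin q) (sin (2*q)) (rr lam gam p) (exp (Hlam lam gam p0 p)).
Proof.
  intros H. unfold d_q. apply Dx_is.
  eapply is_derive_ext; [ | apply gen_q0 with (H := Hlam lam gam p0 p) (C0 := C0 g lam gam p0)].
  { intros t. simpl. symmetry. apply hstar_eq. }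
  apply Rgt_not_eq, rr_pos; auto.
Qed.

Lemma dqq_eq g lam gam p0 b q p : 0 < lam - 2 * gam * p ->
  d_qq (hstar g lam gam p0 b) q p =
  hEqq gam (r0 lam gam p0) (C2 g lam gam) b (cos q) (cos (2*q)) (rr lam gam p) (exp (Hlam lam gam p0 p)).
Proof.
  intros H. unfold d_qq. apply Dx_is.
  eapply is_derive_ext; [ | apply gen_q1].
  { intros t. simpl. symmetry. apply dq_eq; auto. }
  apply Rgt_not_eq, rr_pos; auto.
Qed.

Lemma dpq_eq g lam gam p0 b q p : 0 < lam - 2 * gam * p -> 0 < lam - 2 * gam * p0 ->
  d_pq (hstar g lam gam p0 b) q p =
  hE1q gam (r0 lam gam p0) (C2 g lam gam) b (sin q) (sin (2*q)) (rr lam gam p) (exp (Hlam lam gam p0 p)).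
Proof.
  intros H H0. unfold d_pq. apply Dx_is.
  eapply is_derive_ext; [ | apply gen_q2 with (H := Hlam lam gam p0 p) (C0 := C0 g lam gam p0)].
  { intros t. simpl. symmetry. apply dp_eq; auto. }
  apply Rgt_not_eq, rr_pos; auto.
Qed.

Definition HopL gam LQ LP LQQ LPP LPQ :=
  padd (padd (padd (pmul (padd [1] (pmul LQ LQ)) LPP) (pscal (-2) (pmul (pmul LP LQ) LPQ)))
     (pmul (pmul LP LP) LQQ)) (pscal (-gam) (pmul (pmul LP LP) LP)).

Lemma HopL_ok gam LQ LP LQQ LPP LPQ b :
  (1 + (peval LQ b)^2) * peval LPP b - 2 * peval LP b * peval LQ b * peval LPQ b
  + (peval LP b)^2 * peval LQQ b - gam * (peval LP b)^3 = peval (HopL gam LQ LP LQQ LPP LPQ) b.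
Proof.
  unfold HopL. rewrite !peval_padd, !peval_pscal, !peval_pmul, !peval_padd, !peval_pmul.
  simpl. ring.
Qed.

Definition Lq gam Rz C2 s s2 r E := [0; Rz / r * sh E * (- s); Rz^2 * (- (2 * s2)) * Bf gam C2 r E].
Definition Lqq gam Rz C2 c c2 r E := [0; Rz / r * sh E * (- c); Rz^2 * (- (4 * c2)) * Bf gam C2 r E].
Definition Lpq gam Rz C2 s s2 r E := [0; Rz * (- s) * M1 gam r E; Rz^2 * (- (2 * s2)) * B1 gam C2 r E].
Definition Lh gam Rz C0 C2 c c2 r H E := [H; Rz / r * sh E * c; uE gam Rz C0 C2 c2 r H E].
Definition Lp gam Rz C0 C2 c c2 r H E := [/ r; Rz * c * M1 gam r E; Rz^2 * A1 gam C0 r H E + Rz^2 * c2 * B1 gam C2 r E].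
Definition Lpp gam Rz C0 C2 c c2 r H E := [gam / r^3; Rz * c * M2 gam r E; Rz^2 * A2 gam C0 r H E + Rz^2 * c2 * B2 gam C2 r E].

Lemma even_trick (F : R -> R) s c : s * s = 1 - c * c ->
  (forall x, F x = F 0 + x * x * (F 1 - F 0)) -> F 0 + (1 - c * c) * (F 1 - F 0) = 0 -> F s = 0.
Proof. intros Hs HF H0. rewrite HF, Hs. exact H0. Qed.

Lemma int0 gam Rz C0 C2 c s s2 r H E : r <> 0 -> E <> 0 ->
  nth 0 (HopL gam (Lq gam Rz C2 s s2 r E) (Lp gam Rz C0 C2 c (2*c*c-1) r H E)
      (Lqq gam Rz C2 c (2*c*c-1) r E) (Lpp gam Rz C0 C2 c (2*c*c-1) r H E) (Lpq gam Rz C2 s s2 r E)) 0 = 0.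
Proof.
  intros rn En. cbn. field. auto.
Qed.

Lemma int1 gam Rz C0 C2 c s s2 r H E : r <> 0 -> E <> 0 ->
  nth 1 (HopL gam (Lq gam Rz C2 s s2 r E) (Lp gam Rz C0 C2 c (2*c*c-1) r H E)
      (Lqq gam Rz C2 c (2*c*c-1) r E) (Lpp gam Rz C0 C2 c (2*c*c-1) r H E) (Lpq gam Rz C2 s s2 r E)) 0 = 0.
Proof.
  intros rn En. cbn. unfold M1, M2, sh, ch. field. auto.
Qed.

Ltac even_tac s c Hs :=
  match goal with |- ?L = 0 => let t := eval pattern s in L in
    match t with ?f _ => apply (even_trick f s c Hs) end end.

Lemma int2 gam Rz C0 C2 c s s2 r H E : r <> 0 -> E <> 0 -> s * s = 1 - c * c ->
  nth 2 (HopL gam (Lq gam Rz C2 s s2 r E) (Lp gam Rz C0 C2 c (2*c*c-1) r H E)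
      (Lqq gam Rz C2 c (2*c*c-1) r E) (Lpp gam Rz C0 C2 c (2*c*c-1) r H E) (Lpq gam Rz C2 s s2 r E)) 0 = 0.
Proof.
  intros rn En Hs. cbn.
  even_tac s c Hs.
  - intros x. cbv beta. field. auto.
  - cbv beta. unfold M1, M2, A1, A2, B1, B2, W1, W2, uE, Bf, sh, ch, sh2, ch2. field. auto.
Qed.

Lemma pe_q gam Rz C2 b s s2 r E : hEq gam Rz C2 b s s2 r E = peval (Lq gam Rz C2 s s2 r E) b.
Proof. unfold hEq, Lq. simpl. ring. Qed.
Lemma pe_qq gam Rz C2 b c c2 r E : hEqq gam Rz C2 b c c2 r E = peval (Lqq gam Rz C2 c c2 r E) b.
Proof. unfold hEqq, Lqq. simpl. ring. Qed.
Lemma pe_pq gam Rz C2 b s s2 r E : hE1q gam Rz C2 b s s2 r E = peval (Lpq gam Rz C2 s s2 r E) b.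
Proof. unfold hE1q, Lpq. simpl. ring. Qed.
Lemma pe_h gam Rz C0 C2 b c c2 r H E : hE gam Rz C0 C2 b c c2 r H E = peval (Lh gam Rz C0 C2 c c2 r H E) b.
Proof. unfold hE, Lh. simpl. ring. Qed.
Lemma pe_p gam Rz C0 C2 b c c2 r H E : hE1 gam Rz C0 C2 b c c2 r H E = peval (Lp gam Rz C0 C2 c c2 r H E) b.
Proof. unfold hE1, Lp. simpl. ring. Qed.
Lemma pe_pp gam Rz C0 C2 b c c2 r H E : hE2 gam Rz C0 C2 b c c2 r H E = peval (Lpp gam Rz C0 C2 c c2 r H E) b.
Proof. unfold hE2, Lpp. simpl. ring. Qed.

Definition B0L g Q LQ LH LP :=
  padd [1] (padd (pmul LQ LQ) (pmul (padd (pscal (2*g) LH) [-Q]) (pmul LP LP))).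

Lemma B0L_ok g Q LQ LH LP b :
  1 + (peval LQ b)^2 + (2 * g * peval LH b - Q) * (peval LP b)^2 = peval (B0L g Q LQ LH LP) b.
Proof.
  unfold B0L. rewrite !peval_padd, !peval_pmul, !peval_padd, !peval_pscal. simpl. ring.
Qed.

Definition C0a g L gam p0 Rz :=
  L * (3 * g * (g - gam * L) + L*L * (gam^2 - L*L)) * (Rz + L)
  / (4 * ((g - gam * L)^2 - (L*L)^2) * (2 * g * p0 + L*L * Rz + L * Rz^2)).
Definition C2a g L gam :=
  (3 * g * (g - gam * L) + L*L * (gam^2 - 3 * (L*L))) / (8 * L^5).
Definition Qa g L p0 Rz := L*L - 4 * g * p0 / (L + Rz).

Lemma bd0 g gam L Rz p0 c s s2 E : L > 0 -> Rz > 0 -> E <> 0 ->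
  nth 0 (B0L g (Qa g L p0 Rz) (Lq gam Rz (C2a g L gam) s s2 L E)
    (Lh gam Rz (C0a g L gam p0 Rz) (C2a g L gam) c (2*c*c-1) L (2 * (0 - p0) / (L + Rz)) E)
    (Lp gam Rz (C0a g L gam p0 Rz) (C2a g L gam) c (2*c*c-1) L (2 * (0 - p0) / (L + Rz)) E)) 0 = 0.
Proof.
  intros HL HR En. cbn. unfold Qa. field. lra.
Qed.

Lemma bd1 g gam L Rz p0 c s s2 E : L > 0 -> Rz > 0 -> E <> 0 -> E * E - 1 <> 0 ->
  g = gam * L + L * L * (E * E + 1) / (E * E - 1) ->
  nth 1 (B0L g (Qa g L p0 Rz) (Lq gam Rz (C2a g L gam) s s2 L E)
    (Lh gam Rz (C0a g L gam p0 Rz) (C2a g L gam) c (2*c*c-1) L (2 * (0 - p0) / (L + Rz)) E)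
    (Lp gam Rz (C0a g L gam p0 Rz) (C2a g L gam) c (2*c*c-1) L (2 * (0 - p0) / (L + Rz)) E)) 0 = 0.
Proof.
  intros HL HR En HE hg. subst g. cbn. unfold Qa, M1, sh, ch. field. repeat split; auto; lra.
Qed.

Lemma bd2 g gam L Rz p0 c s s2 E : L > 0 -> Rz > 0 -> E <> 0 -> E * E - 1 <> 0 -> p0 <> 0 ->
  s * s = 1 - c * c ->
  (g - gam * L)^2 - (L*L)^2 <> 0 -> 2 * g * p0 + L*L * Rz + L * Rz^2 <> 0 ->
  g = gam * L + L * L * (E * E + 1) / (E * E - 1) ->
  gam = (L * L - Rz * Rz) / (2 * p0) ->
  nth 2 (B0L g (Qa g L p0 Rz) (Lq gam Rz (C2a g L gam) s s2 L E)
    (Lh gam Rz (C0a g L gam p0 Rz) (C2a g L gam) c (2*c*c-1) L (2 * (0 - p0) / (L + Rz)) E)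
    (Lp gam Rz (C0a g L gam p0 Rz) (C2a g L gam) c (2*c*c-1) L (2 * (0 - p0) / (L + Rz)) E)) 0 = 0.
Proof.
  intros HL HR En HE hp Hs hD hN hg hgam. cbn.
  even_tac s c Hs.
  - intros x. cbv beta. unfold Qa. field. repeat split; lra.
  - cbv beta. subst g gam. unfold Qa, C0a, C2a, M1, A1, B1, W1, uE, Bf, sh, ch, sh2, ch2. field.
    repeat split; try lra.
    + intro Hz. apply hN. apply (Rmult_eq_reg_r (E * E - 1)); [|exact HE].
      match type of Hz with ?S = 0 => transitivity S end.
      * field. auto.
      * rewrite Hz. ring.
    + intro Hz. apply hD. apply (Rmult_eq_reg_r ((E * E - 1)^2 * (4 * p0^2))); [|nz].
      match type of Hz with ?S = 0 => transitivity S end.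
      * field. auto.
      * rewrite Hz. ring.
Qed.

Lemma ok_p lam gam p0 p : 0 < lam -> 0 < lam - 2 * gam * p0 -> p0 <= p <= 0 -> 0 < lam - 2 * gam * p.
Proof.
  intros H1 H2 [H3 H4]. destruct (Rle_dec 0 gam).
  - nra.
  - nra.
Qed.

Lemma C0_eq g lam gam p0 : 0 <= lam -> C0 g lam gam p0 = C0a g (sqrt lam) gam p0 (r0 lam gam p0).
Proof. intros H. unfold C0a. rewrite sqrt_sqrt by exact H. reflexivity. Qed.
Lemma C2_eq g lam gam : 0 <= lam -> C2 g lam gam = C2a g (sqrt lam) gam.
Proof. intros H. unfold C2a. rewrite sqrt_sqrt by exact H. reflexivity. Qed.
Lemma Q_eq g lam gam p0 : 0 <= lam -> Qstar g lam gam p0 = Qa g (sqrt lam) p0 (r0 lam gam p0).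
Proof. intros H. unfold Qa. rewrite sqrt_sqrt by exact H. reflexivity. Qed.

Lemma disp_l g gam lam L Rz p0 E : 0 < L -> 0 < Rz -> lam = L * L -> g - gam * L <> 0 ->
  lam / (g - gam * L) + tanh (2 * p0 / (L + Rz)) = 0 ->
  E = exp (2 * (0 - p0) / (L + Rz)) -> 0 < E -> E * E - 1 <> 0 ->
  g = gam * L + L * L * (E * E + 1) / (E * E - 1).
Proof.
  intros HL HR Hl Hg Hd HE Ep EE.
  assert (Ex1 : exp (- (2 * p0 / (L + Rz))) = E).
  { rewrite HE. f_equal. field. lra. }
  assert (Ex2 : exp (2 * p0 / (L + Rz)) = / E).
  { rewrite <- Ex1, exp_Ropp, Rinv_inv. reflexivity. }
  unfold tanh, sinh, cosh in Hd. rewrite Ex1, Ex2 in Hd. subst lam.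
  assert (Ht : L * L / (g - gam * L) = (E * E - 1) / (E * E + 1)).
  { apply (Rplus_eq_reg_r ((/ E - E) / 2 / ((/ E + E) / 2))). rewrite Hd. field.
    split; [lra|nra]. }
  assert (Hg2 : g - gam * L = L * L / (L * L / (g - gam * L))) by (field; split; lra).
  rewrite Ht in Hg2. 
  apply (Rplus_eq_reg_r (- (gam * L))). rewrite <- (Rminus_def g), Hg2. field. split; [exact EE|]. nra.
Qed.

Lemma bridge g p0 gam lam c s s2
  (hg : 0 < g) (hp0 : p0 < 0) (hlam : 0 < lam)
  (hlam2 : 0 < lam - 2 * gam * p0)
  (hne : g - gam * sqrt lam <> 0)
  (hdisp : lam / (g - gam * sqrt lam)
           + tanh (2 * p0 / (sqrt lam + sqrt (lam - 2 * gam * p0))) = 0)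
  (hDelta : Delta_w g lam gam <> 0)
  (hDen0 : Den0 g lam gam p0 <> 0) (Hs : s * s = 1 - c * c) :
  let X := B0L g (Qstar g lam gam p0)
    (Lq gam (r0 lam gam p0) (C2 g lam gam) s s2 (rr lam gam 0) (exp (Hlam lam gam p0 0)))
    (Lh gam (r0 lam gam p0) (C0 g lam gam p0) (C2 g lam gam) c (2*c*c-1) (rr lam gam 0) (Hlam lam gam p0 0) (exp (Hlam lam gam p0 0)))
    (Lp gam (r0 lam gam p0) (C0 g lam gam p0) (C2 g lam gam) c (2*c*c-1) (rr lam gam 0) (Hlam lam gam p0 0) (exp (Hlam lam gam p0 0))) in
  nth 0 X 0 = 0 /\ nth 1 X 0 = 0 /\ nth 2 X 0 = 0.
Proof.
  intros X.
  assert (HL : 0 < sqrt lam) by (apply sqrt_lt_R0; exact hlam).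
  assert (HR : 0 < r0 lam gam p0) by (apply rr_pos; exact hlam2).
  assert (rr0 : rr lam gam 0 = sqrt lam) by (unfold rr; f_equal; ring).
  assert (Hl0 : Hlam lam gam p0 0 = 2 * (0 - p0) / (sqrt lam + r0 lam gam p0)) by (unfold Hlam; rewrite rr0; reflexivity).
  assert (Hpos : 0 < 2 * (0 - p0) / (sqrt lam + r0 lam gam p0)) by (apply Rdiv_lt_0_compat; lra).
  set (E := exp (2 * (0 - p0) / (sqrt lam + r0 lam gam p0))).
  assert (E1 : 1 < E) by (unfold E; rewrite <- exp_0; apply exp_increasing; exact Hpos).
  assert (EE : E * E - 1 <> 0) by nra.
  assert (En : E <> 0) by lra.
  assert (hgd : g = gam * sqrt lam + sqrt lam * sqrt lam * (E * E + 1) / (E * E - 1)).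
  { apply (disp_l g gam lam (sqrt lam) (r0 lam gam p0) p0 E); auto; try lra.
    rewrite sqrt_sqrt; lra. }
  assert (hgam : gam = (sqrt lam * sqrt lam - r0 lam gam p0 * r0 lam gam p0) / (2 * p0)).
  { unfold r0, rr. rewrite !sqrt_sqrt by lra. field. lra. }
  assert (hD : (g - gam * sqrt lam)^2 - (sqrt lam * sqrt lam)^2 <> 0).
  { rewrite sqrt_sqrt by lra. exact hDelta. }
  assert (hN : 2 * g * p0 + sqrt lam * sqrt lam * r0 lam gam p0 + sqrt lam * (r0 lam gam p0)^2 <> 0).
  { rewrite sqrt_sqrt by lra. exact hDen0. }
  unfold X. rewrite rr0, Hl0. fold E.
  rewrite C0_eq, C2_eq, Q_eq by lra.
  split; [|split].
  - apply bd0; auto.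
  - apply bd1; auto.
  - apply bd2; auto. lra.
Qed.

Theorem mainTheorem3 (g p0 gamma lam : R)
  (hg : 0 < g) (hp0 : p0 < 0) (hlam : 0 < lam)
  (hlam2 : 0 < lam - 2 * gamma * p0)
  (hne : g - gamma * sqrt lam <> 0)
  (hdisp : lam / (g - gamma * sqrt lam)
           + tanh (2 * p0 / (sqrt lam + sqrt (lam - 2 * gamma * p0))) = 0)
  (hDelta : Delta_w g lam gamma <> 0)
  (hDen0 : Den0 g lam gamma p0 <> 0) :
  (forall q p, -PI <= q <= PI -> p0 <= p <= 0 ->
     is_O_b3 (fun b => Hop gamma (hstar g lam gamma p0 b) q p))
  /\ (forall q,
     is_O_b3 (fun b => B0op g (Qstar g lam gamma p0) (hstar g lam gamma p0 b) q))
  /\ (forall q b, B1op p0 (hstar g lam gamma p0 b) q = 0).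
Proof.
  assert (Hs : forall q, sin q * sin q = 1 - cos q * cos q).
  { intros q. pose proof (sin2_cos2 q) as H. unfold Rsqr in H. lra. }
  split; [|split].
  - intros q p Hq Hp.
    assert (ok : 0 < lam - 2 * gamma * p) by (apply ok_p with p0; auto).
    assert (rn : rr lam gamma p <> 0) by (apply Rgt_not_eq, rr_pos; exact ok).
    assert (En : exp (Hlam lam gamma p0 p) <> 0) by (apply Rgt_not_eq, exp_pos).
    apply O3 with (l := HopL gamma
      (Lq gamma (r0 lam gamma p0) (C2 g lam gamma) (sin q) (sin (2*q)) (rr lam gamma p) (exp (Hlam lam gamma p0 p)))
      (Lp gamma (r0 lam gamma p0) (C0 g lam gamma p0) (C2 g lam gamma) (cos q) (2*cos q*cos q-1) (rr lam gamma p) (Hlam lam gamma p0 p) (exp (Hlam lam gamma p0 p)))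
      (Lqq gamma (r0 lam gamma p0) (C2 g lam gamma) (cos q) (2*cos q*cos q-1) (rr lam gamma p) (exp (Hlam lam gamma p0 p)))
      (Lpp gamma (r0 lam gamma p0) (C0 g lam gamma p0) (C2 g lam gamma) (cos q) (2*cos q*cos q-1) (rr lam gamma p) (Hlam lam gamma p0 p) (exp (Hlam lam gamma p0 p)))
      (Lpq gamma (r0 lam gamma p0) (C2 g lam gamma) (sin q) (sin (2*q)) (rr lam gamma p) (exp (Hlam lam gamma p0 p)))).
    + intros b. unfold Hop.
      rewrite dq_eq, dp_eq, dqq_eq, dpp_eq, dpq_eq by auto.
      rewrite !cos_2a_cos, pe_q, pe_p, pe_qq, pe_pp, pe_pq. apply HopL_ok.
    + apply int0; auto.
    + apply int1; auto.
    + apply int2; auto.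
  - intros q.
    assert (ok0 : 0 < lam - 2 * gamma * 0) by lra.
    destruct (bridge g p0 gamma lam (cos q) (sin q) (sin (2*q)) hg hp0 hlam hlam2 hne hdisp hDelta hDen0 (Hs q))
      as [B0 [B1 B2]].
    eapply O3; [ | exact B0 | exact B1 | exact B2 ].
    intros b. unfold B0op.
    rewrite dq_eq, dp_eq by auto. rewrite hstar_eq.
    rewrite !cos_2a_cos, pe_q, pe_h, pe_p. apply B0L_ok.
  - intros q b. unfold B1op. rewrite hstar_eq.
    assert (H0 : Hlam lam gamma p0 p0 = 0).
    { unfold Hlam. rewrite Rminus_diag. unfold Rdiv. ring. }
    assert (rn : rr lam gamma p0 <> 0) by (apply Rgt_not_eq, rr_pos; exact hlam2).
    rewrite H0, exp_0. unfold hE, uE, sh, sh2, ch2. field. exact rn.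
Qed.
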